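(* Let $K\in\{\mathbb R,\mathbb C,\mathbb H\}$ and let $(E,d)$ be a metric vector space over $K$ such that $d$ is $C_0$-translation invariant and $(C_1,C_2,C_3)$-lipschitz multiplicative. Let $d_0(x,y)=\int_{\mathbb U}d(ux,uy)\,d\mu(u)$, $\delta_0(x,y)=\lim_{n\to\infty}\frac1n d_0(nx,ny)$, and $E_0=\{x\in E:\delta_0(x,0)=0\}$ (the maximal linear subspace of $E$ on which $d$ is bounded). For a class $\bar x=x+E_0\in E/E_0$ set $\|\bar x\|=\delta_0(x,0)$. Then this is independent of the representative $x$ of $\bar x$, and $\|\cdot\|:E/E_0\to\mathbb R_+$ is a norm.
   Context: A metric vector space is a topological vector space over $K$ whose topology is generated by the metric $d$. $\mathbb U=\{u\in K:|u|=1\}$, $\mu$ the right-invariant Haar probability measure on $\mathbb U$. $d$ is $C_0$-translation invariant if $d(x+z,y+z)\le d(x,y)+C_0$ for all $x,y,z$. $(C_1,C_2,C_3)$-lipschitz multiplicative ($C_1\ge1$, $C_2,C_3\ge0$) means $C_1^{-1}|\lambda|d(x,y)-C_2|\lambda|-C_3\le d(\lambda x,\lambda y)\le C_1|\lambda|d(x,y)+C_2|\lambda|+C_3$ for all $\lambda\in K$, $x,y\in E$. (Under these hypotheses the limit defining $\delta_0$ exists.) *)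

(* Defs.v *)
From HB Require Import structures.
From mathcomp Require Import all_boot all_order all_algebra.
From mathcomp Require Import all_classical all_reals all_analysis.
Import Order.TTheory GRing.Theory Num.Theory.
Import numFieldNormedType.Exports.

Set Implicit Arguments.
Unset Strict Implicit.
Unset Printing Implicit Defensive.

Local Open Scope ring_scope.
Local Open Scope classical_set_scope.

(* K is a unital associative R-algebra equipped with an absolute value  *)
(* absK (multiplicative, definite, subadditive, extending |.| on R).   *)
(* By the Urbanik-Wright / Frobenius-Mazur theorem such a K is          *)
(* isometrically isomorphic to R, C or H.                *)

Definition is_absval (R : realType) (K : unitAlgType R) (absK : K -> R) :=
  [/\ forall x y : K, absK (x * y) = absK x * absK y,
      forall x : K, absK x = 0 <-> x = 0,
      forall x y : K, absK (x + y) <= absK x + absK y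
    & forall r : R, absK (r *: (1 : K)) = `|r| ].

(* carrier of K, seen as a pointed type (needed for the Borel sigma-algebra) *)
Definition Kpt (R : realType) (K : unitAlgType R) : Type := K.
HB.instance Definition _ (R : realType) (K : unitAlgType R) :=
  Choice.on (Kpt K).
HB.instance Definition _ (R : realType) (K : unitAlgType R) :=
  isPointed.Build (Kpt K) (0 : K).

Definition Kopen (R : realType) (K : unitAlgType R) (absK : K -> R)
  : set (set (Kpt K)) :=
  [set A | forall x : K, A x ->
     exists2 e : R, 0 < e & forall y : K, absK (y - x) < e -> A y].

Definition KBorel (R : realType) (K : unitAlgType R) (absK : K -> R) :=
  g_sigma_algebraType (Kopen absK).

Definition Usph (R : realType) (K : unitAlgType R) (absK : K -> R)
  : set (KBorel absK) := [set u | absK u = 1].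
Arguments Usph {R K} absK _.

Definition right_haar_on_U (R : realType) (K : unitAlgType R) (absK : K -> R)
  (mu : probability (KBorel absK) R) :=
  mu (Usph absK) = 1%E /\
  forall v : K, absK v = 1 ->
    forall A : set (KBorel absK), measurable A ->
      mu ((fun u : KBorel absK => (u : K) * v) @^-1` A) = mu A.

Definition is_metric (R : realType) (T : Type) (d : T -> T -> R) :=
  [/\ forall x y, 0 <= d x y,
      forall x y, d x y = 0 <-> x = y,
      forall x y, d x y = d y x
    & forall x y z, d x z <= d x y + d y z ].

Definition metric_vector_space (R : realType) (K : unitAlgType R)
  (absK : K -> R) (E : lmodType K) (d : E -> E -> R) :=
  [/\ is_metric d,
      forall (x y : E) (e : R), 0 < e -> exists2 r : R, 0 < r &
        forall x' y' : E, d x x' < r -> d y y' < r -> d (x + y) (x' + y') < e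
    & forall (l : K) (x : E) (e : R), 0 < e -> exists2 r : R, 0 < r &
        forall (l' : K) (x' : E), absK (l - l') < r -> d x x' < r ->
          d (l *: x) (l' *: x') < e ].

Definition translation_invariant_up_to (R : realType) (E : zmodType)
  (d : E -> E -> R) (C0 : R) :=
  forall x y z : E, d (x + z) (y + z) <= d x y + C0.

Definition lipschitz_multiplicative (R : realType) (K : unitAlgType R)
  (absK : K -> R) (E : lmodType K) (d : E -> E -> R) (C1 C2 C3 : R) :=
  [/\ 1 <= C1, 0 <= C2, 0 <= C3 &
      forall (l : K) (x y : E),
        C1^-1 * absK l * d x y - C2 * absK l - C3 <= d (l *: x) (l *: y) /\
        d (l *: x) (l *: y) <= C1 * absK l * d x y + C2 * absK l + C3 ].

Definition d0 (R : realType) (K : unitAlgType R) (absK : K -> R)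
  (mu : probability (KBorel absK) R) (E : lmodType K) (d : E -> E -> R)
  (x y : E) : R :=
  fine (\int[mu]_(u in Usph absK) (d ((u : K) *: x) ((u : K) *: y))%:E)%E.

Definition delta0 (R : realType) (K : unitAlgType R) (absK : K -> R)
  (mu : probability (KBorel absK) R) (E : lmodType K) (d : E -> E -> R)
  (x y : E) : R :=
  limn ((fun n : nat => n%:R^-1 * d0 mu d (x *+ n) (y *+ n)) : R^nat).

Definition E0 (R : realType) (K : unitAlgType R) (absK : K -> R)
  (mu : probability (KBorel absK) R) (E : lmodType K) (d : E -> E -> R)
  : set E := [set x | delta0 mu d x 0 = 0].

(* Main.v *)
Require Import Defs.
From HB Require Import structures.
From mathcomp Require Import all_boot all_order all_algebra.
From mathcomp Require Import all_classical all_reals all_analysis.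
From mathcomp Require Import zify ring lra.
Import Order.TTheory GRing.Theory Num.Theory.
Import numFieldNormedType.Exports.
Local Open Scope ring_scope.
Local Open Scope classical_set_scope.
Section Seq.
Variable R : realType.

Lemma ev_nat (P : nat -> Prop) : (\forall n \near \oo, P n) <-> exists N, forall n, (N <= n)%N -> P n.
Proof.
split.
  by move=> [N _ hN]; exists N => n hn; apply: hN.
by move=> [N hN]; exists N => // n /= hn; apply: hN.
Qed.

Lemma subseq_cvg (u : R^nat) (L : R) p : (0 < p)%N -> u n @[n --> \oo] --> L ->
  u (p * n)%N @[n --> \oo] --> L.
Proof.
move=> p0 /cvgrPdist_lt h; apply/cvgrPdist_lt => e e0.
have := h e e0. move=> /ev_nat [N hN].
apply/ev_nat; exists N => n hn; apply: hN.
apply: (leq_trans hn); by rewrite leq_pmull.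
Qed.

Lemma eventually_small (c e : R) : 0 < e -> \forall n \near \oo, c / n%:R < e.
Proof.
move=> e0; apply/ev_nat; exists (Num.truncn (`|c| / e)).+1 => n hn.
have n0 : (0 < n)%N by apply: leq_trans hn.
have n0' : (0:R) < n%:R by rewrite ltr0n.
rewrite ltr_pdivrMr //.
apply: (le_lt_trans (ler_norm c)).
rewrite -ltr_pdivrMl // mulrC.
apply: (lt_le_trans (truncnS_gt _)).
by rewrite ler_nat.
Qed.

Lemma cmp_lim (u v : R^nat) (L M c : R) : u n @[n --> \oo] --> L -> v n @[n --> \oo] --> M ->
  (forall n, (0 < n)%N -> u n <= v n + c / n%:R) -> L <= M.
Proof.
move=> /cvgrPdist_lt hu /cvgrPdist_lt hv huv.
rewrite leNgt; apply/negP => ML.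
pose e := (L - M) / 3.
have e0 : 0 < e by rewrite divr_gt0 // subr_gt0.
have := hu e e0; have := hv e e0; have := @eventually_small c e e0.
move=> /ev_nat [N1 h1] /ev_nat [N2 h2] /ev_nat [N3 h3].
pose n := (N1 + N2 + N3).+1.
have := huv n erefl.
have := h1 n ltac:(rewrite /n; lia). have := h2 n ltac:(rewrite /n; lia).
have := h3 n ltac:(rewrite /n; lia).
rewrite !ltr_norml => /andP[a1 a2] /andP[b1 b2] c1 d.
have : L - M < 3 * e by lra.
by rewrite /e mulrC divfK ?ltxx //; rewrite pnatr_eq0.
Qed.
Lemma fekete (a : R^nat) (c : R) : 0 <= c -> (forall n, 0 <= a n) ->
  (forall m n, a (m + n)%N <= a m + a n + c) ->
  a n / n%:R @[n --> \oo] --> inf [set (a n + c) / n%:R | n in [set n | (0 < n)%N]].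
Proof.
move=> c0 a0 sub.
pose b n := a n + c.
have b0 n : 0 <= b n by rewrite /b addr_ge0.
have bsub m n : b (m + n)%N <= b m + b n by rewrite /b; have := sub m n; lra.
set S := [set _ | _ in _].
have hS : has_inf S.
  split; first by exists (b 1%N / 1%:R), 1%N.
  exists 0; rewrite /lbound /= => _ [n /= n0 <-]; by rewrite divr_ge0 ?b0.
have Slb n : (0 < n)%N -> inf S <= b n / n%:R.
  by move=> n0; apply: (ge_inf hS.2); exists n.
have bq q m r : b (q * m + r)%N <= q%:R * b m + b r.
  elim: q => [|q IH]; first by rewrite mul0n add0n mul0r add0r.
  rewrite mulSn -addnA; apply: (le_trans (bsub _ _)).
  by rewrite mulrSr; lra.
apply/cvgrPdist_lt => e e0.
have e20 : 0 < e / 2 by rewrite divr_gt0.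
have [_ [m /= m0 <-] hm] := inf_adherent e20 hS.
pose M := \sum_(r < m) b r.
have bM r : (r < m)%N -> b r <= M.
  move=> rm; rewrite /M (bigD1 (Ordinal rm)) //= lerDl.
  by apply: sumr_ge0 => i _.
have := @eventually_small M (e / 2) e20.
have := @eventually_small c e e0.
move=> /ev_nat [N1 h1] /ev_nat [N2 h2].
apply/ev_nat; exists (N1 + N2).+1 => n hn.
have n0 : (0 < n)%N by apply: leq_trans hn.
have n0' : (0:R) < n%:R by rewrite ltr0n.
have m0' : (0:R) < m%:R by rewrite ltr0n.
have hc := h1 n ltac:(lia).
have hM := h2 n ltac:(lia).
have hL := Slb n n0.
have up : b n / n%:R <= b m / m%:R + M / n%:R.
  have := bq (n %/ m)%N m (n %% m)%N; rewrite -divn_eq => hb.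
  have hr := bM _ (ltn_pmod n m0).
  have qm : ((n %/ m) * m)%:R <= (n%:R : R) by rewrite ler_nat leq_trunc_div.
  rewrite ler_pdivrMr // mulrDl divfK ?gt_eqF //.
  apply: (le_trans hb); apply: lerD => //.
  have hq : (n %/ m)%:R <= n%:R / m%:R :> R by rewrite ler_pdivlMr // -natrM.
  apply: (le_trans (ler_wpM2r (b0 m) hq)).
  by rewrite le_eqVlt; apply/orP; left; apply/eqP; ring.
have eq : a n / n%:R = b n / n%:R - c / n%:R by rewrite /b mulrDl addrK.
rewrite eq ltr_norml; have := divr_ge0 c0 (ltW n0'); move: hm.
rewrite -/S => hm hc0; have hm2 : b m / m%:R < inf S + e / 2 := hm.
apply/andP; split; lra.
Qed.
End Seq.
Arguments subseq_cvg {R}.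
Arguments eventually_small {R}.
Arguments cmp_lim {R}.
Arguments fekete {R}.

Section Main.
Variables (R : realType) (K : unitAlgType R) (absK : K -> R)
  (mu : probability (KBorel absK) R) (E : lmodType K) (d : E -> E -> R)
  (C0 C1 C2 C3 : R).
Hypotheses (habs : is_absval absK) (hhaar : right_haar_on_U mu)
  (hmvs : metric_vector_space absK d) (htr : translation_invariant_up_to d C0)
  (hlip : lipschitz_multiplicative absK d C1 C2 C3).

Let absM x y : absK (x * y) = absK x * absK y. Proof. by case: habs. Qed.
Let abs_eq0 x : absK x = 0 <-> x = 0. Proof. by case: habs. Qed.
Let absD x y : absK (x + y) <= absK x + absK y. Proof. by case: habs. Qed.
Let absR r : absK (r *: 1) = `|r|. Proof. by case: habs. Qed.

Lemma abs0 : absK 0 = 0. Proof. exact/abs_eq0. Qed.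
Lemma abs1 : absK 1 = 1. Proof. by have := absR 1; rewrite scale1r normr1. Qed.
Lemma absN1 : absK (-1) = 1.
Proof. by have := absR (-1); rewrite scaleN1r normrN normr1. Qed.
Lemma absN x : absK (- x) = absK x.
Proof. by rewrite -mulN1r absM absN1 mul1r. Qed.
Lemma abs_ge0 x : 0 <= absK x.
Proof.
have := absD x (- x); rewrite subrr abs0 absN; lra.
Qed.
Lemma absB x y : absK (x - y) = absK (y - x).
Proof. by rewrite -absN opprB. Qed.
Lemma abs_lip x y : `|absK x - absK y| <= absK (x - y).
Proof.
rewrite ler_norml; apply/andP; split.
  have := absD (y - x) x; rewrite subrK absB; lra.
have := absD (x - y) y; rewrite subrK; lra.
Qed.
Lemma absZ (r : R) x : absK (r *: x) = `|r| * absK x.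
Proof. by rewrite -[x]mul1r scalerAl absM absR mul1r. Qed.

Let dge0 x y : 0 <= d x y. Proof. by case: hmvs => -[]. Qed.
Let deq0 x y : d x y = 0 <-> x = y. Proof. by case: hmvs => -[]. Qed.
Let dC x y : d x y = d y x. Proof. by case: hmvs => -[]. Qed.
Let dtri x y z : d x z <= d x y + d y z. Proof. by case: hmvs => -[]. Qed.
Lemma dxx x : d x x = 0. Proof. exact/deq0. Qed.
Lemma C0_ge0 : 0 <= C0.
Proof. have := htr 0 0 0; rewrite addr0 dxx; lra. Qed.
Let lipU l x y : d (l *: x) (l *: y) <= C1 * absK l * d x y + C2 * absK l + C3.
Proof. by case: hlip => _ _ _ /(_ l x y) []. Qed.
Lemma C1_ge1 : 1 <= C1. Proof. by case: hlip. Qed.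
Lemma C2_ge0 : 0 <= C2. Proof. by case: hlip. Qed.
Lemma C3_ge0 : 0 <= C3. Proof. by case: hlip. Qed.

Let D : set (KBorel absK) := Usph absK.

Definition contK (f : K -> R) := forall x e, 0 < e -> exists2 r, 0 < r &
  forall y, absK (y - x) < r -> `|f y - f x| < e.

Lemma contK_open f a : contK f -> Kopen absK [set u | a < f u].
Proof.
move=> cf x /= ax.
have [r r0 hr] := cf x (f x - a) ltac:(by rewrite subr_gt0).
exists r => // y /hr; rewrite ltr_norml => /andP[h1 h2]; lra.
Qed.

Lemma contK_meas f (A : set (KBorel absK)) : contK f -> measurable_fun A f.
Proof.
move=> cf mA; apply: (measurability _ (measurable_realfun.RGenOInfty.measurableE R)) => //.
move=> /= _ [_ [x ->] <-]; apply: measurableI => //.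
apply: sub_sigma_algebra.
suff -> : f @^-1` `]x, +oo[ = [set u | x < f u] by exact: contK_open.
by apply/seteqP; split => u /=; rewrite in_itv /= andbT.
Qed.

Lemma measD : measurable D.
Proof.
have -> : D = ~` [set u : KBorel absK | absK u != 1].
  by apply/seteqP; split => u /=; rewrite /D /Usph /=; case: eqP => //= ->.
apply: measurableC; apply: sub_sigma_algebra => x /= hx.
exists `|absK x - 1|; first by rewrite normr_gt0 subr_eq0.
move=> y hy; apply/eqP => y1.
have := abs_lip y x; rewrite y1 distrC; lra.
Qed.

Lemma contZ (a : E) u e : 0 < e -> exists2 r, 0 < r &
  forall y, absK (y - u) < r -> d (u *: a) (y *: a) < e.
Proof.
move=> e0; case: hmvs => _ _ /(_ u a e e0) [r r0 hr].
exists r => // y hy; apply: hr; first by rewrite absB.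
by rewrite dxx.
Qed.

Definition F (a b : E) : KBorel absK -> R := fun u => d ((u : K) *: a) ((u : K) *: b).

Lemma contF a b : contK (F a b).
Proof.
move=> u e e0.
have e20 : 0 < e / 2 by rewrite divr_gt0.
have [r1 r10 h1] := @contZ a u (e / 2) e20.
have [r2 r20 h2] := @contZ b u (e / 2) e20.
exists (Num.min r1 r2); first by rewrite lt_min r10 r20.
move=> y; rewrite lt_min => /andP[y1 y2].
have := h1 y y1; have := h2 y y2.
rewrite /F.
have := dtri (y *: a) (u *: a) (y *: b); have := dtri (u *: a) (u *: b) (y *: b).
have := dtri (u *: a) (y *: a) (u *: b); have := dtri (y *: a) (y *: b) (u *: b).
rewrite (dC (y *: a) (u *: a)) (dC (y *: b) (u *: b)).
move=> *; rewrite ltr_norml; apply/andP; split; lra.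
Qed.

Lemma F_ge0 a b u : 0 <= F a b u. Proof. exact: dge0. Qed.

Lemma F_ub a b u : D u -> F a b u <= C1 * d a b + C2 + C3.
Proof.
by move=> Du; have := lipU u a b; rewrite /D /Usph /= in Du; rewrite Du !mulr1.
Qed.

Lemma muD : mu D = 1%E. Proof. by case: hhaar. Qed.

Lemma intF a b : mu.-integrable D (EFin \o F a b).
Proof.
apply: measurable_bounded_integrable.
- exact: measD.
- by apply: (le_lt_trans (probability_le1 _ measD)); rewrite ltry.
- by apply: contK_meas; apply: contF.
exists (C1 * d a b + C2 + C3); split; first by rewrite num_real.
move=> M hM u Du /=.
rewrite ger0_norm ?F_ge0 //; apply: (le_trans (@F_ub a b u Du)); exact: ltW.
Qed.

Lemma d0E a b : d0 mu d a b = Rintegral mu D (F a b).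
Proof. by []. Qed.


Lemma intG (f : KBorel absK -> R) B : measurable_fun D f ->
  (forall u, D u -> `|f u| <= B) -> mu.-integrable D (EFin \o f).
Proof.
move=> mf hB; apply: measurable_bounded_integrable => //.
- exact: measD.
- by apply: (le_lt_trans (probability_le1 _ measD)); rewrite ltry.
exists B; split; first by rewrite num_real.
move=> M hM u Du /=; apply: (le_trans (hB u Du)); exact: ltW.
Qed.

Lemma measF a b : measurable_fun D (F a b).
Proof. by apply: contK_meas; apply: contF. Qed.


Lemma d0_le a b c e c' e' (al be ga : R) : 0 <= al -> 0 <= be ->
  (forall u, D u -> F a b u <= al * F c e u + be * F c' e' u + ga) ->
  d0 mu d a b <= al * d0 mu d c e + be * d0 mu d c' e' + ga.
Proof.
move=> al0 be0 h; rewrite !d0E.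
have i1 := intF c e; have i2 := intF c' e'.
have iZ1 : mu.-integrable D (EFin \o (fun u => al * F c e u)).
  apply: (@intG _ (al * (C1 * d c e + C2 + C3))).
    by apply: measurable_realfun.measurable_funM => //; exact: measF.
  move=> u Du; rewrite normrM ger0_norm // ger0_norm ?F_ge0 //.
  by apply: ler_wpM2l => //; apply: F_ub.
have iZ2 : mu.-integrable D (EFin \o (fun u => be * F c' e' u)).
  apply: (@intG _ (be * (C1 * d c' e' + C2 + C3))).
    by apply: measurable_realfun.measurable_funM => //; exact: measF.
  move=> u Du; rewrite normrM ger0_norm // ger0_norm ?F_ge0 //.
  by apply: ler_wpM2l => //; apply: F_ub.
have iS : mu.-integrable D (EFin \o (fun u => al * F c e u + be * F c' e' u)).
  apply: (@intG _ (al * (C1 * d c e + C2 + C3) + be * (C1 * d c' e' + C2 + C3))).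
    by apply: measurable_realfun.measurable_funD; apply: measurable_realfun.measurable_funM => //; exact: measF.
  move=> u Du; rewrite ger0_norm; last by rewrite addr_ge0 // mulr_ge0 // F_ge0.
  by apply: lerD; apply: ler_wpM2l => //; apply: F_ub.
have iC : mu.-integrable D (EFin \o (fun u : KBorel absK => ga)).
  apply: (@intG _ (`|ga|)) => //.
have iT : mu.-integrable D (EFin \o (fun u => al * F c e u + be * F c' e' u + ga)).
  apply: (@intG _ (al * (C1 * d c e + C2 + C3) + be * (C1 * d c' e' + C2 + C3) + `|ga|)).
    by apply: measurable_realfun.measurable_funD => //; apply: measurable_realfun.measurable_funD; apply: measurable_realfun.measurable_funM => //; exact: measF.
  move=> u Du; apply: (le_trans (ler_normD _ _)); apply: lerD => //.
  rewrite ger0_norm; last by rewrite addr_ge0 // mulr_ge0 // F_ge0.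
  by apply: lerD; apply: ler_wpM2l => //; apply: F_ub.
apply: (le_trans (le_Rintegral measD (intF a b) iT h)).
rewrite (RintegralD measD iS iC).
rewrite (RintegralD measD iZ1 iZ2).
rewrite (RintegralZl al measD i1) (RintegralZl be measD i2).
rewrite Rintegral_cst ?measD //.
have -> : fine (mu D) = 1 by rewrite muD.
by rewrite mulr1.
exact: measD.
Qed.


Lemma d0_ge0 a b : 0 <= d0 mu d a b.
Proof. by rewrite d0E; apply: Rintegral_ge0 => u _; exact: F_ge0. Qed.

Lemma d0_0 : d0 mu d 0 0 = 0.
Proof.
rewrite d0E (@eq_Rintegral _ _ _ mu D (fun=> 0)); last by move=> u _; rewrite /F scaler0 dxx.
by rewrite Rintegral_cst ?mul0r //; exact: measD.
Qed.

Lemma rmul_meas v : absK v = 1 ->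
  measurable_fun setT (fun u : KBorel absK => ((u : K) * v : KBorel absK)).
Proof.
move=> hv.
have hG : @measurable _ (KBorel absK) = <<s Kopen absK >> by [].
apply: (measurability _ hG) => //.
move=> _ [A oA <-]; apply: sub_sigma_algebra => x [_ /= Ax].
have [e e0 he] := oA _ Ax.
exists e => // y hy; split => //=; apply: he.
by rewrite -mulrBl absM hv mulr1.
Qed.

Lemma d0_rinv v a b : absK v = 1 -> d0 mu d (v *: a) (v *: b) = d0 mu d a b.
Proof.
move=> hv; rewrite !d0E /Rintegral; congr fine.
pose phi := fun u : KBorel absK => ((u : K) * v : KBorel absK).
have mphi := @rmul_meas v hv.
have pD : phi @^-1` D = D.
  by apply/seteqP; split => u; rewrite /phi /D /Usph /= absM hv mulr1.
have H := ge0_integral_pushforward mphi mu measD (f := EFin \o F a b)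
  ((measurable_realfun.measurable_EFinP _ _).2 (measF a b)) (fun u _ => F_ge0 a b u : (0 <= (F a b u)%:E)%E).
rewrite pD in H.
transitivity (\int[mu]_(x in D) ((EFin \o F a b) \o phi) x)%E.
  by apply: eq_integral => u _ /=; rewrite /F /phi !scalerA.
rewrite -H; apply: eq_measure_integral => A mA _ /=.
by rewrite /pushforward; case: hhaar => _ /(_ v hv A mA).
Qed.


Definition dl (x : E) := delta0 mu d x 0.
Definition aa (x : E) (n : nat) := d0 mu d (x *+ n) 0.

Lemma F_add a b u : F (a + b) 0 u <= F a 0 u + F b 0 u + C0.
Proof.
rewrite /F !scaler0 scalerDr.
have := dtri ((u : K) *: a + (u : K) *: b) ((u : K) *: b) 0.
have := htr ((u : K) *: a) 0 ((u : K) *: b); rewrite add0r; lra.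
Qed.

Lemma d0_add a b : d0 mu d (a + b) 0 <= d0 mu d a 0 + d0 mu d b 0 + C0.
Proof.
have := @d0_le (a + b) 0 a 0 b 0 1 1 C0 ler01 ler01.
rewrite !mul1r; apply => u _; rewrite !mul1r; exact: F_add.
Qed.

Lemma aa_ge0 x n : 0 <= aa x n. Proof. exact: d0_ge0. Qed.

Lemma cvg_aa x : aa x n / n%:R @[n --> \oo] --> dl x.
Proof.
have sub m n : aa x (m + n)%N <= aa x m + aa x n + C0.
  by rewrite /aa mulrnDr; apply: d0_add.
have h := fekete (aa x) C0 C0_ge0 (aa_ge0 x) sub.
rewrite /dl /delta0.
have -> : (fun n : nat => n%:R^-1 * d0 mu d (x *+ n) (0 *+ n)) = (fun n => aa x n / n%:R).
  by apply: funext => n; rewrite mul0rn mulrC.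
by rewrite (cvg_lim _ h).
Qed.

Lemma dl_eq x L : aa x n / n%:R @[n --> \oo] --> L -> dl x = L.
Proof.
move=> h; rewrite /dl /delta0.
have -> : (fun n : nat => n%:R^-1 * d0 mu d (x *+ n) (0 *+ n)) = (fun n => aa x n / n%:R).
  by apply: funext => n; rewrite mul0rn mulrC.
by rewrite (cvg_lim _ h).
Qed.

Lemma dl_ge0 x : 0 <= dl x.
Proof.
apply: (cmp_lim (fun=> 0) _ 0 _ 0 (cvg_cst 0) (cvg_aa x)) => n _.
by rewrite mul0r addr0 divr_ge0 ?aa_ge0.
Qed.

Lemma dl_le x y z (al be ga : R) : 0 <= al -> 0 <= be ->
  (forall n, aa x n <= al * aa y n + be * aa z n + ga) ->
  dl x <= al * dl y + be * dl z.
Proof.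
move=> al0 be0 h.
have hv : (fun n => al * (aa y n / n%:R) + be * (aa z n / n%:R)) @ \oo --> al * dl y + be * dl z.
  apply: cvgD; apply: cvgM => //; [exact: cvg_cst|exact: cvg_aa|exact: cvg_cst|exact: cvg_aa].
apply: (cmp_lim _ _ _ _ ga (cvg_aa x) hv) => n n0.
have n0' : (0:R) < n%:R by rewrite ltr0n.
rewrite !mulrA -!mulrDl ler_pM2r ?invr_gt0 //; exact: h.
Qed.

Lemma dl_tri x y : dl (x + y) <= dl x + dl y.
Proof.
have := @dl_le (x + y) x y 1 1 C0 ler01 ler01; rewrite !mul1r; apply => n.
by rewrite /aa mulrnDl !mul1r; apply: d0_add.
Qed.

Lemma dl_rinv v x : absK v = 1 -> dl (v *: x) = dl x.
Proof.
move=> hv; apply: dl_eq.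
have -> : (fun n => aa (v *: x) n / n%:R) = (fun n => aa x n / n%:R) => //.
  apply: funext => n; rewrite /aa scalerMnr.
  by rewrite -(@d0_rinv v (x *+ n) 0 hv) scaler0.
exact: cvg_aa.
Qed.

Lemma dl_N x : dl (- x) = dl x.
Proof. by rewrite -scaleN1r dl_rinv // absN1. Qed.

Lemma dl_0 : dl 0 = 0.
Proof.
apply: dl_eq.
have -> : (fun n => aa 0 n / n%:R) = (fun=> 0) => //.
  by apply: funext => n; rewrite /aa mul0rn d0_0 mul0r.
exact: cvg_cst.
Qed.

Lemma dl_nat x p : dl (x *+ p) = p%:R * dl x.
Proof.
case: p => [|p]; first by rewrite mulr0n dl_0 mul0r.
apply: dl_eq.
have -> : (fun n => aa (x *+ p.+1) n / n%:R) =
    (fun n => p.+1%:R * (aa x (p.+1 * n)%N / (p.+1 * n)%N%:R)).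
  apply: funext => n; rewrite /aa -mulrnA natrM invfM.
  have hp : (p.+1%:R : R) != 0 by rewrite pnatr_eq0.
  by rewrite mulrCA mulVKf.
have h2 := subseq_cvg (fun n => aa x n / n%:R) (dl x) p.+1 erefl (cvg_aa x).
exact: (cvgM (cvg_cst _) h2).
Qed.


Lemma commA (s : R) (u : K) : u * s%:A = s%:A * u.
Proof. by rewrite -scalerAr -scalerAl mulr1 mul1r. Qed.

Lemma F_scal (s : R) a u : 0 <= s ->
  F (s%:A *: a) 0 u <= C1 * s * F a 0 u + C2 * s + C3.
Proof.
move=> s0; rewrite /F !scaler0 scalerA commA -scalerA.
have := lipU s%:A ((u : K) *: a) 0; rewrite scaler0 absR ger0_norm //.
Qed.

Lemma dl_sub s x : 0 <= s -> dl (s%:A *: x) <= C1 * s * dl x.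
Proof.
move=> s0.
have hC1 : 0 <= C1 * s by rewrite mulr_ge0 // (le_trans ler01 C1_ge1).
have := @dl_le (s%:A *: x) x x (C1 * s) 0 (C2 * s + C3) hC1 (lexx 0).
rewrite mul0r addr0; apply => n.
rewrite /aa mul0r addr0 scalerMnr.
have := @d0_le (s%:A *: (x *+ n)) 0 (x *+ n) 0 (x *+ n) 0 (C1 * s) 0 (C2 * s + C3) hC1 (lexx 0).
rewrite mul0r addr0; apply => u _; rewrite mul0r addr0 addrA; exact: F_scal.
Qed.

Lemma dl_real t x : 0 <= t -> dl (t%:A *: x) = t * dl x.
Proof.
move=> t0.
set y := t%:A *: x.
have dx0 := dl_ge0 x.
have C1g : 1 <= C1 := C1_ge1.
have key n : (0 < n)%N -> n%:R * `|dl y - t * dl x| <= (C1 + 1) * dl x.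
  move=> n0.
  have nt0 : 0 <= n%:R * t by rewrite mulr_ge0.
  set m := Num.truncn (n%:R * t).
  have /andP[hm1 hm2] := truncn_itv nt0; rewrite -/m in hm1 hm2.
  set s := n%:R * t - m%:R.
  have s0 : 0 <= s by rewrite subr_ge0.
  have s1 : s <= 1 by rewrite /s; rewrite -natr1 in hm2; lra.
  have hyn : y *+ n = x *+ m + s%:A *: x.
    rewrite /y scalerMnl -[x *+ m]scaler_nat -scalerDl.
    congr (_ *: x).
    have hmK : (m%:R : K) = (m%:R : R)%:A by rewrite scaler_nat.
    rewrite hmK -scalerDl scalerMnl; congr (_ *: 1).
    by rewrite /s -mulr_natl addrC subrK.
  have hsub := @dl_sub s x s0.
  have hsd : C1 * s * dl x <= C1 * dl x.
    by rewrite -mulrA ler_wpM2l ?(le_trans ler01) // ler_piMl.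
  have e1 : n%:R * dl y <= m%:R * dl x + C1 * s * dl x.
    rewrite -dl_nat hyn; apply: (le_trans (dl_tri _ _)).
    by rewrite dl_nat lerD.
  have e2 : m%:R * dl x <= n%:R * dl y + C1 * s * dl x.
    rewrite -dl_nat -dl_nat.
    have -> : x *+ m = y *+ n + - (s%:A *: x) by rewrite hyn addrK.
    by apply: (le_trans (dl_tri _ _)); rewrite dl_N lerD.
  have e3 : n%:R * (t * dl x) = m%:R * dl x + s * dl x.
    by rewrite /s mulrA mulrBl addrC subrK.
  have e4 : s * dl x <= dl x by rewrite ler_piMl.
  have e5 : 0 <= s * dl x by rewrite mulr_ge0.
  have hn : n%:R * `|dl y - t * dl x| = `|n%:R * (dl y - t * dl x)|.
    by rewrite normrM normr_nat.
  rewrite hn mulrBr ler_norml; apply/andP; split; lra.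
apply/eqP; rewrite -subr_eq0 -normr_eq0; apply/eqP.
apply/le_anti; apply/andP; split; last exact: normr_ge0.
rewrite leNgt; apply/negP => w0.
have := @eventually_small R ((C1 + 1) * dl x) _ w0.
move=> /ev_nat [N hN].
have := hN N.+1 (leqnSn N); have := key N.+1 erefl.
have n0 : (0:R) < N.+1%:R by rewrite ltr0n.
rewrite ltr_pdivrMr // mulrC; lra.
Qed.


Lemma dl_hom l x : dl (l *: x) = absK l * dl x.
Proof.
have [->|l0] := eqVneq l 0; first by rewrite scale0r dl_0 abs0 mul0r.
have r0 : 0 < absK l.
  rewrite lt_def abs_ge0 andbT; apply/eqP => /abs_eq0 h; by rewrite h eqxx in l0.
set v := (absK l)^-1 *: l.
have hv : absK v = 1 by rewrite /v absZ ger0_norm ?invr_ge0 ?abs_ge0 // mulVf ?gt_eqF.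
have hl : l = (absK l)%:A * v.
  by rewrite -scalerAl mul1r /v scalerA divff ?gt_eqF // scale1r.
by rewrite {1}hl -scalerA dl_real ?abs_ge0 // dl_rinv.
Qed.

Lemma main_sec :
  let nrm := fun x : E => delta0 mu d x 0 in
  let E_0 := E0 mu d in
  [/\ E_0 0, (forall x y, E_0 x -> E_0 y -> E_0 (x + y))
    & (forall (l : K) x, E_0 x -> E_0 (l *: x))] /\
  (forall x y : E, E_0 (x - y) -> nrm x = nrm y) /\
  [/\ forall x : E, 0 <= nrm x,
      forall x : E, nrm x = 0 <-> E_0 x,
      forall (l : K) (x : E), nrm (l *: x) = absK l * nrm x
    & forall x y : E, nrm (x + y) <= nrm x + nrm y].
Proof.
rewrite /E0 /=; rewrite -/dl.
have dlE x : delta0 mu d x 0 = dl x by [].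
split; [split|split; [|split]].
- exact: dl_0.
- move=> x y; rewrite !dlE => hx hy; apply/le_anti; apply/andP; split.
    by have := dl_tri x y; rewrite hx hy addr0.
  exact: dl_ge0.
- by move=> l x; rewrite !dlE => hx; rewrite dl_hom hx mulr0.
- move=> x y; rewrite !dlE => h; apply/le_anti; apply/andP; split.
    have := dl_tri (x - y) y; rewrite subrK h add0r //.
  have := dl_tri (- (x - y)) x; rewrite dl_N h add0r opprB subrK //.
- exact: dl_ge0.
- by [].
- exact: dl_hom.
- exact: dl_tri.
Qed.

End Main.

Theorem proposition6
  (R : realType) (K : unitAlgType R) (absK : K -> R)
  (mu : probability (KBorel absK) R)
  (E : lmodType K) (d : E -> E -> R) (C0 C1 C2 C3 : R) :
  is_absval absK ->
  right_haar_on_U mu ->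
  metric_vector_space absK d ->
  translation_invariant_up_to d C0 ->
  lipschitz_multiplicative absK d C1 C2 C3 ->
  let nrm := fun x : E => delta0 mu d x 0 in
  let E_0 := E0 mu d in
  [/\ E_0 0, (forall x y, E_0 x -> E_0 y -> E_0 (x + y))
    & (forall (l : K) x, E_0 x -> E_0 (l *: x))] /\
  (forall x y : E, E_0 (x - y) -> nrm x = nrm y) /\
  [/\ forall x : E, 0 <= nrm x,
      forall x : E, nrm x = 0 <-> E_0 x,
      forall (l : K) (x : E), nrm (l *: x) = absK l * nrm x
    & forall x y : E, nrm (x + y) <= nrm x + nrm y].
Proof.
move=> habs hhaar hmvs htr hlip.
exact: (@main_sec R K absK mu E d C0 C1 C2 C3 habs hhaar hmvs htr hlip).
Qed.
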